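(* Let $\mathfrak g=\mathrm{span}_{i\mathbb R}\tilde{\mathfrak g}\subseteq\mathfrak{su}(2^n)$ be a Lie algebra spanned by $i$ times the Pauli strings in a set $\tilde{\mathfrak g}$, and let $b_1\ne b_2$ be two commuting Pauli strings in $\tilde{\mathfrak g}$ that lie in the same connected component of the frustration graph of $\mathfrak g$. Then their distance in the frustration graph is $2$; i.e. there exists a Pauli string $g\in\tilde{\mathfrak g}$ with $[g,b_1]\ne0$ and $[g,b_2]\ne0$.
   Context: Pauli strings on $n$ qubits are tensor products of $I,X,Y,Z$, not all identity; two Pauli strings either commute or anticommute. It is assumed that every Pauli string $\sigma$ with $i\sigma\in\mathfrak g$ belongs to $\tilde{\mathfrak g}$ (Pauli strings are considered up to sign/phase). The frustration graph of $\mathfrak g$ has vertex set $\tilde{\mathfrak g}$ and an edge between $\sigma,\tau$ iff $[\sigma,\tau]\neq0$. *)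

(* Defs.v *)
From HB Require Import structures.
From mathcomp Require Import all_boot all_order all_algebra all_field.
Set Implicit Arguments. Unset Strict Implicit. Unset Printing Implicit Defensive.
Import Order.TTheory GRing.Theory Num.Theory.
Local Open Scope ring_scope.

(* Pauli strings on n qubits: each qubit gets one of I (0), X (1), Y (2), Z (3).
   Pauli strings are considered up to phase, so we use these canonical labels. *)
Definition pauli_label (n : nat) := {ffun 'I_n -> 'I_4}.

Definition is_pauli_string n (s : pauli_label n) : bool := [exists k, s k != ord0].

(* single-qubit Pauli matrices, entries indexed by bits (false = |0>, true = |1>) *)
Definition pauli1 (p : 'I_4) (a b : bool) : algC :=
  match val p with
  | 0 => if a == b then 1 else 0
  | 1 => if a == b then 0 else 1
  | 2 => if a == b then 0 else if a then 'i else - 'i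
  | _ => if a == b then (if a then -1 else 1) else 0
  end.

Definition qbit (i : nat) (k : nat) : bool := odd (i %/ 2 ^ k).

(* the 2^n x 2^n matrix of the Pauli string s (tensor product of single-qubit
   Pauli matrices, qubit k corresponding to bit k of the basis index) *)
Definition pauli_mx n (s : pauli_label n) : 'M[algC]_(2 ^ n) :=
  \matrix_(i, j) \prod_(k < n) pauli1 (s k) (qbit i k) (qbit j k).

Definition mx_comm m (A B : 'M[algC]_m) : 'M[algC]_m := A *m B - B *m A.

Definition in_span_iR n (G : {set pauli_label n}) (M : 'M[algC]_(2 ^ n)) : Prop :=
  exists c : pauli_label n -> algC,
    (forall s, c s \is Num.real) /\
    M = \sum_(s in G) c s *: ('i *: pauli_mx s).

Definition frustr n (G : {set pauli_label n}) : rel (pauli_label n) :=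
  fun s t => [&& s \in G, t \in G & mx_comm (pauli_mx s) (pauli_mx t) != 0].

(* Main.v *)
Require Import Defs.
From mathcomp Require Import all_boot all_order all_algebra all_field.
From mathcomp Require Import ring.
Import GRing.Theory Num.Theory.
Local Open Scope ring_scope.
Set Implicit Arguments. Unset Strict Implicit.

Definition pm (p q : 'I_4) : 'I_4 := inord (match val p, val q with
 | 0, x => x | x, 0 => x | 1,2 => 3 | 1,3 => 2 | 2,1 => 3 | 2,3 => 1
 | 3,1 => 2 | 3,2 => 1 | _,_ => 0 end).
Definition ph (p q : 'I_4) : algC := match val p, val q with
 | 1,2 => 'i | 2,1 => -'i | 2,3 => 'i | 3,2 => -'i | 3,1 => 'i | 1,3 => -'i
 | _,_ => 1 end.
Definition anti (p q : 'I_4) : bool := [&& val p != 0, val q != 0 & val p != val q].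

Lemma ii : 'i * 'i = -1 :> algC. Proof. by rewrite -expr2 sqrCi. Qed.

Lemma q_mul p q a b : pauli1 p a false * pauli1 q false b + pauli1 p a true * pauli1 q true b
  = ph p q * pauli1 (pm p q) a b.
Proof.
case: p => [[|[|[|[|p]]]] //= Hp]; case: q => [[|[|[|[|q]]]] //= Hq];
 case: a; case: b; rewrite /pauli1 /ph /pm /= ?inordK //=;
 rewrite ?(mulr0, mul0r, mulr1, mul1r, addr0, add0r, mulrN, mulNr, opprK, ii) //.
Qed.
Lemma q_pmC p q : pm q p = pm p q.
Proof. apply: val_inj. by case: p => [[|[|[|[|p]]]] //= Hp]; case: q => [[|[|[|[|q]]]] //= Hq]. Qed.
Lemma q_phC p q : ph q p = (-1) ^+ anti p q * ph p q.
Proof.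
by case: p => [[|[|[|[|p]]]] //= Hp]; case: q => [[|[|[|[|q]]]] //= Hq];
  rewrite /ph /anti /= ?expr0 ?expr1 ?mul1r ?mulN1r ?opprK.
Qed.
Lemma q_ph2 p q : ph p q ^+ 2 = (-1) ^+ anti p q.
Proof.
by case: p => [[|[|[|[|p]]]] //= Hp]; case: q => [[|[|[|[|q]]]] //= Hq];
  rewrite /ph /anti /= ?expr0 ?expr1 ?sqrrN ?sqrCi // expr1n.
Qed.
Lemma q_pp p : ph p p = 1 /\ pm p p = ord0.
Proof.
split; last apply: val_inj;
by case: p => [[|[|[|[|p]]]] //= Hp]; rewrite /pm /= ?inordK.
Qed.
Lemma q_pm0 p q : pm p q = ord0 -> anti p q = false.
Proof.
move/(congr1 val).
by case: p => [[|[|[|[|p]]]] //= Hp]; case: q => [[|[|[|[|q]]]] //= Hq]; rewrite /pm /= ?inordK.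
Qed.

Lemma qbit_lo n l : (l < 2 ^ n)%N -> qbit l n = false.
Proof. by move=> H; rewrite /qbit divn_small. Qed.
Lemma qbit_hi n l : (l < 2 ^ n)%N -> qbit (l + 2 ^ n) n = true.
Proof. move=> H; rewrite /qbit -[X in (_ + X)%N]mul1n divnDMl ?expn_gt0 // divn_small //. Qed.
Lemma qbit_sh n l k : (k < n)%N -> qbit (l + 2 ^ n) k = qbit l k.
Proof.
move=> H; rewrite /qbit -(subnK (ltnW H)) expnD divnDMl ?expn_gt0 //.
have P : (n - k != 0)%N by rewrite -lt0n subn_gt0.
by rewrite oddD oddX (negbTE P) /= addbF.
Qed.

Lemma factor (R : comNzRingType) n (f : 'I_n -> bool -> R) :
  \sum_(l < 2 ^ n) \prod_(k < n) f k (qbit l k) = \prod_(k < n) (f k false + f k true).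
Proof.
elim: n f => [|n IH] f.
  by rewrite expn0 big_ord1 !big_ord0.
rewrite -(big_mkord xpredT (fun l => \prod_(k < n.+1) f k (qbit l k))).
have H2 : (2 ^ n.+1 = 2 ^ n + 2 ^ n)%N by rewrite expnS mul2n addnn.
rewrite H2 (big_cat_nat _ (leq_addr _ _)) //= (big_addn 0 _ (2 ^ n)) addnK big_ord_recr /=.
rewrite mulrDr -(IH (fun k => f (widen_ord (leqnSn n) k))) !big_distrl !big_mkord.
congr (_ + _); apply: eq_bigr => l _; rewrite big_ord_recr /=.
  by rewrite qbit_lo.
rewrite qbit_hi //; congr (_ * _).
by apply: eq_bigr => k _; rewrite qbit_sh.
Qed.

Lemma qbit0 i : qbit i 0 = odd i.
Proof. by rewrite /qbit expn0 divn1. Qed.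
Lemma qbitS i k : qbit i k.+1 = qbit i./2 k.
Proof. by rewrite /qbit expnS divnMA divn2. Qed.

Lemma bits_inj n i j : (i < 2 ^ n)%N -> (j < 2 ^ n)%N ->
  (forall k, (k < n)%N -> qbit i k = qbit j k) -> i = j.
Proof.
elim: n i j => [|n IH] i j.
  by rewrite expn0 !ltnS !leqn0 => /eqP -> /eqP ->.
move=> Hi Hj H.
have E : i./2 = j./2.
  apply: IH; first by rewrite -divn2 ltn_divLR // mulnC -expnS.
    by rewrite -divn2 ltn_divLR // mulnC -expnS.
  by move=> k Hk; rewrite -!qbitS H.
have O : odd i = odd j by rewrite -!qbit0 H.
by rewrite -(odd_double_half i) -(odd_double_half j) E O.
Qed.

Definition wl n (s t : pauli_label n) : pauli_label n := [ffun k => pm (s k) (t k)].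
Definition Lam n (s t : pauli_label n) : algC := \prod_(k < n) ph (s k) (t k).
Definition sgn n (s t : pauli_label n) : algC := \prod_(k < n) (-1) ^+ anti (s k) (t k).

Lemma pauli_mul n (s t : pauli_label n) : pauli_mx s *m pauli_mx t = Lam s t *: pauli_mx (wl s t).
Proof.
apply/matrixP => i j; rewrite !mxE.
under eq_bigr => l _ do rewrite !mxE -big_split /=.
rewrite (@factor _ _ (fun k c => pauli1 (s k) (qbit i k) c * pauli1 (t k) c (qbit j k))).
under eq_bigr => k _ do rewrite q_mul.
by rewrite big_split /= /Lam; congr (_ * _); apply: eq_bigr => k _; rewrite ffunE.
Qed.

Definition zl n : pauli_label n := [ffun => ord0].

Lemma P0 n : pauli_mx (zl n) = 1%:M.
Proof.
apply/matrixP => i j; rewrite !mxE.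
under eq_bigr => k _ do rewrite ffunE /pauli1 /=.
case: (eqVneq i j) => [->|Hij].
  by rewrite /= big1 // => k _; rewrite eqxx.
rewrite /=.
have [k Hk] : exists k : 'I_n, qbit i k != qbit j k.
  apply/existsP; apply: contraR Hij; rewrite negb_exists => /forallP H.
  apply/eqP/val_inj; apply: (bits_inj (ltn_ord i) (ltn_ord j)) => k Hk.
  by move: (H (Ordinal Hk)); rewrite negbK => /eqP.
by rewrite (bigD1 k) //= (negbTE Hk) mul0r.
Qed.

Lemma sq_mx n (s : pauli_label n) : pauli_mx s *m pauli_mx s = 1%:M.
Proof.
rewrite pauli_mul.
have -> : wl s s = zl n by apply/ffunP => k; rewrite !ffunE (q_pp (s k)).2.
rewrite P0 /Lam big1 ?scale1r // => k _; exact: (q_pp _).1.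
Qed.

Lemma comm_mx n (s t : pauli_label n) :
  pauli_mx t *m pauli_mx s = sgn s t *: (pauli_mx s *m pauli_mx t).
Proof.
rewrite !pauli_mul scalerA.
have -> : wl t s = wl s t by apply/ffunP => k; rewrite !ffunE q_pmC.
congr (_ *: _); rewrite /Lam /sgn -big_split /=; apply: eq_bigr => k _; exact: q_phC.
Qed.

Lemma sgn_pm n (s t : pauli_label n) : sgn s t = 1 \/ sgn s t = -1.
Proof.
rewrite /sgn; apply: (big_ind (fun x : algC => x = 1 \/ x = -1)); first by left.
  by move=> x y [->|->] [->|->]; rewrite ?mul1r ?mulN1r ?opprK; auto.
by move=> k _; case: anti; rewrite ?expr1 ?expr0; auto.
Qed.

Lemma Lam2 n (s t : pauli_label n) : Lam s t ^+ 2 = sgn s t.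
Proof. rewrite /Lam -prodrXl; apply: eq_bigr => k _; exact: q_ph2. Qed.

Lemma one_neq0 n : (1%:M : 'M[algC]_(2 ^ n)) != 0.
Proof.
apply/eqP => /matrixP /(_ (Ordinal (expn_gt0 2 n)) (Ordinal (expn_gt0 2 n))).
by rewrite !mxE eqxx /= => /eqP; rewrite oner_eq0.
Qed.

Lemma mulP_neq0 n (M : 'M[algC]_(2 ^ n)) (s : pauli_label n) :
  M != 0 -> M *m pauli_mx s != 0.
Proof.
apply: contraNN => /eqP H; apply/eqP.
by rewrite -(mulmx1 M) -(sq_mx s) mulmxA H mul0mx.
Qed.

Lemma P_neq0 n (s : pauli_label n) : pauli_mx s != 0.
Proof. by rewrite -(mul1mx (pauli_mx s)); apply: mulP_neq0; apply: one_neq0. Qed.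

Lemma N1_neq1 : (-1 : algC) != 1.
Proof. by rewrite -subr_eq0 -opprD oppr_eq0 -(natrD _ 1 1) pnatr_eq0. Qed.

Lemma comm_eq n (s t : pauli_label n) :
  mx_comm (pauli_mx s) (pauli_mx t) = (1 - sgn s t) *: (pauli_mx s *m pauli_mx t).
Proof. by rewrite /mx_comm (comm_mx s t) scalerBl scale1r. Qed.

Lemma comm0 n (s t : pauli_label n) :
  (mx_comm (pauli_mx s) (pauli_mx t) == 0) = (sgn s t == 1).
Proof.
rewrite comm_eq scalemx_eq0 (negbTE (mulP_neq0 _ (P_neq0 s))) orbF subr_eq0 eq_sym.
done.
Qed.

Lemma span_scale n (G : {set pauli_label n}) (M : 'M[algC]_(2 ^ n)) r :
  r \is Num.real -> in_span_iR G M -> in_span_iR G (r *: M).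
Proof.
move=> Hr [c [Hc ->]]; exists (fun s => r * c s); split.
  by move=> s; rewrite rpredM.
by rewrite scaler_sumr; apply: eq_bigr => s _; rewrite scalerA.
Qed.

Lemma span_basis n (G : {set pauli_label n}) s :
  s \in G -> in_span_iR G ('i *: pauli_mx s).
Proof.
move=> Hs; exists (fun t => (t == s)%:R); split.
  by move=> t; rewrite realn.
rewrite (bigD1 s) //= eqxx scale1r big1 ?addr0 // => t /andP [_ /negbTE ->].
by rewrite scale0r.
Qed.

Lemma two_neq0 : (2 : algC) != 0.
Proof. by rewrite pnatr_eq0. Qed.

Lemma key n (G : {set pauli_label n})
  (Hlie : forall A B : 'M[algC]_(2 ^ n),
      in_span_iR G A -> in_span_iR G B -> in_span_iR G (mx_comm A B))
  (Hfull : forall s : pauli_label n, is_pauli_string s ->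
      in_span_iR G ('i *: pauli_mx s) -> s \in G)
  u y : u \in G -> y \in G -> mx_comm (pauli_mx u) (pauli_mx y) != 0 ->
  exists2 w, w \in G & forall z, (sgn z u == 1) != (sgn z y == 1) ->
     mx_comm (pauli_mx w) (pauli_mx z) != 0.
Proof.
move=> Hu Hy Huy.
have Hs : sgn u y = -1.
  by move: Huy; rewrite comm0; case: (sgn_pm u y) => ->; rewrite ?eqxx.
have HL : Lam u y = 'i \/ Lam u y = - 'i.
  have : Lam u y ^+ 2 == 'i ^+ 2 by rewrite Lam2 Hs sqrCi.
  by rewrite eqf_sqr => /orP [/eqP|/eqP]; auto.
have HL0 : Lam u y != 0.
  by case: HL => ->; rewrite ?oppr_eq0 neq0Ci.
have Hw : pauli_mx (wl u y) = (Lam u y)^-1 *: (pauli_mx u *m pauli_mx y).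
  by rewrite pauli_mul scalerA mulVf // scale1r.
exists (wl u y).
  apply: Hfull.
    case: (boolP [exists k, wl u y k != ord0]) => // /existsPn H.
    have : sgn u y = 1.
      rewrite /sgn big1 // => k _; move: (H k); rewrite negbK ffunE => /eqP /q_pm0 ->.
      by rewrite expr0.
    by rewrite Hs => /eqP; rewrite (negbTE N1_neq1).
  have Hc : mx_comm ('i *: pauli_mx u) ('i *: pauli_mx y)
            = (- 2 * Lam u y) *: pauli_mx (wl u y).
    rewrite /mx_comm -!scalemxAl -!scalemxAr !scalerA -scalerBr.
    rewrite -/(mx_comm _ _) comm_eq Hs pauli_mul !scalerA; congr (_ *: _).
    rewrite ii; ring.
  have Hl := Hlie _ _ (span_basis Hu) (span_basis Hy); rewrite Hc in Hl.
  case: HL => HL; rewrite HL in Hl.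
    have -> : 'i *: pauli_mx (wl u y) = (- 2^-1) *: ((-2 * 'i) *: pauli_mx (wl u y)).
      rewrite scalerA; congr (_ *: _); by field.
    by apply: (span_scale _ Hl); rewrite rpredN rpredV realn.
  have -> : 'i *: pauli_mx (wl u y) = (2^-1) *: ((-2 * - 'i) *: pauli_mx (wl u y)).
    rewrite scalerA; congr (_ *: _); by field.
  by apply: (span_scale _ Hl); rewrite rpredV realn.
move=> z Hz.
rewrite /mx_comm Hw -!scalemxAl -scalemxAr -scalerBr scalemx_eq0 invr_eq0 negb_or HL0 /=.
have E : pauli_mx u *m pauli_mx y *m pauli_mx z
   = (sgn z y * sgn z u) *: (pauli_mx z *m pauli_mx u *m pauli_mx y).
  rewrite -mulmxA (comm_mx z y) -scalemxAr mulmxA (comm_mx z u) -scalemxAl scalerA.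
  by [].
rewrite E mulmxA -{2}(scale1r (pauli_mx z *m pauli_mx u *m pauli_mx y)) -scalerBl.
rewrite scalemx_eq0 negb_or (mulP_neq0 _ (mulP_neq0 _ (P_neq0 z))) andbT.
move: Hz; case: (sgn_pm z u) => ->; case: (sgn_pm z y) => ->; rewrite ?eqxx //=;
  rewrite ?(negbTE N1_neq1) // => _; by rewrite ?mulr1 ?mul1r -opprD oppr_eq0 -(natrD _ 1 1) pnatr_eq0.
Qed.

Lemma comm_sym m (A B : 'M[algC]_m) : (mx_comm B A == 0) = (mx_comm A B == 0).
Proof. by rewrite /mx_comm -oppr_eq0 opprB. Qed.

Unset Implicit Arguments.
Theorem theoremC1 (n : nat) (G : {set pauli_label n})
  (HG : forall s, s \in G -> is_pauli_string s)
  (Hlie : forall A B : 'M[algC]_(2 ^ n),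
      in_span_iR G A -> in_span_iR G B -> in_span_iR G (mx_comm A B))
  (Hfull : forall s : pauli_label n, is_pauli_string s ->
      in_span_iR G ('i *: pauli_mx s) -> s \in G)
  (b1 b2 : pauli_label n) (Hb1 : b1 \in G) (Hb2 : b2 \in G) (Hneq : b1 != b2)
  (Hcomm : mx_comm (pauli_mx b1) (pauli_mx b2) = 0)
  (Hconn : connect (frustr G) b1 b2) :
  exists2 g, g \in G &
    (mx_comm (pauli_mx g) (pauli_mx b1) != 0) /\
    (mx_comm (pauli_mx g) (pauli_mx b2) != 0).
Proof.
pose S c := [\/ c = b1, frustr G b1 c |
  exists2 g, g \in G & mx_comm (pauli_mx g) (pauli_mx b1) != 0 /\
                        mx_comm (pauli_mx g) (pauli_mx c) != 0].
suff : S b2.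
  case => [E|/and3P [_ _ H]|//].
    by move: Hneq; rewrite E eqxx.
  by move: H; rewrite Hcomm eqxx.
move/connectP: Hconn => [p Hp ->].
elim/last_ind: p Hp => [|p x IH]; first by move=> _; apply: Or31.
rewrite rcons_path last_rcons => /andP [Hp Hxy]; have := IH Hp.
move: Hxy; set y := last b1 p => /and3P [Hy Hx Hyx].
case => [Ey | Hby | [g Hg [Hgb Hgy]]].
- by apply: Or32; rewrite /frustr Hb1 Hx -Ey Hyx.
- case: (boolP (frustr G b1 x)) => Hbx; first by apply: Or32.
  apply: Or33; exists y => //; split => //.
  by move: Hby => /and3P [_ _]; rewrite comm_sym.
- case: (boolP (mx_comm (pauli_mx g) (pauli_mx x) != 0)) => Hgx.
    by apply: Or33; exists g.
  case: (boolP (frustr G b1 y)) => Hby.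
    apply: Or33; exists y => //; split => //.
    by move: Hby => /and3P [_ _]; rewrite comm_sym.
  have Hby0 : mx_comm (pauli_mx b1) (pauli_mx y) == 0.
    by move: Hby; rewrite /frustr Hb1 Hy /= negbK.
  have [w Hw Hwz] := key Hlie Hfull Hg Hy Hgy.
  apply: Or33; exists w => //; split; apply: Hwz; rewrite -!comm0.
    by rewrite Hby0 comm_sym (negbTE Hgb).
  by rewrite comm_sym (negbNE Hgx) comm_sym (negbTE Hyx).
Qed.
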